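(* Let $f \in \mathbb{R}[\bar X, \bar Y]$, $\bar X=(X_1,\dots,X_n)$, $\bar Y=(Y_1,\dots,Y_r)$, with $\deg_{\bar X} f = d$ and $\deg_{\bar Y} f = m$. Then for every $\bar x_1, \bar x_2 \in \widetilde\Delta_n$ and every $(\bar y, z)\in C^r$, $$|\bar f(\bar x_1, \bar y, z) - \bar f(\bar x_2, \bar y, z)| \le \frac12 \sqrt{n}\, \|f\|_\bullet \binom{m+r}{r} d(d+1)\, \|\bar x_1 - \bar x_2\|,$$ where $\|\cdot\|$ on $\mathbb{R}^n$ is the Euclidean norm.
   Context: $\widetilde\Delta_n = \{\bar x\in\mathbb{R}^n \mid \sum_i x_i \le 1,\ x_i\ge 0 \text{ for } 1\le i\le n\}$. $C^r = \{(\bar y, z)\in\mathbb{R}^{r+1} \mid y_1^2+\dots+y_r^2+z^2 = 1\}$. For $f = \sum_{\beta\in\mathbb{N}_0^r, |\beta|\le m} f_\beta(\bar X)\bar Y^\beta$ with $\deg_{\bar Y} f = m$, $\bar f = \sum_{|\beta|\le m} f_\beta(\bar X)\bar Y^\beta Z^{m-|\beta|}$ is its homogenization with respect to $\bar Y$ only. The norm $\|\cdot\|_\bullet$: writing $f = \sum_{|\beta|\le m}\sum_{\alpha\in\mathbb{N}_0^n, |\alpha|\le d}\binom{|\alpha|}{\alpha} a_{\alpha,\beta}\bar X^\alpha \bar Y^\beta$, where $|\alpha|=\alpha_1+\dots+\alpha_n$ and $\binom{|\alpha|}{\alpha} = \frac{|\alpha|!}{\alpha_1!\cdots\alpha_n!}$,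 set $\|f\|_\bullet = \max |a_{\alpha,\beta}|$. *)

(* Defs.v *)
From HB Require Import structures.
From mathcomp Require Import all_boot all_order all_algebra.
From mathcomp Require Import reals.
From mathcomp Require Import mpoly.
Set Implicit Arguments. Unset Strict Implicit. Unset Printing Implicit Defensive.
Import Order.TTheory GRing.Theory Num.Theory.
Local Open Scope ring_scope.

(* Polynomials in R[X_1..X_n, Y_1..Y_r] are mpolys in n + r variables:
   variable lshift r i (i < n) is X_(i+1), variable rshift n j (j < r) is Y_(j+1). *)

Section Defs.
Variables (R : realType) (n r : nat).

Definition degXm (mo : 'X_{1..n + r}) : nat := (\sum_(i < n) mo (lshift r i))%N.
Definition degYm (mo : 'X_{1..n + r}) : nat := (\sum_(j < r) mo (rshift n j))%N.

Definition degX (f : {mpoly R[n + r]}) : nat := (\max_(mo <- msupp f) degXm mo)%N.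
Definition degY (f : {mpoly R[n + r]}) : nat := (\max_(mo <- msupp f) degYm mo)%N.

Definition multinomX (mo : 'X_{1..n + r}) : nat :=
  ((degXm mo)`! %/ \prod_(i < n) (mo (lshift r i))`!)%N.

(* ||f||_bullet = max |a_{alpha,beta}|, f = sum binom(|alpha|,alpha) a_{alpha,beta} X^alpha Y^beta *)
Definition bnorm (f : {mpoly R[n + r]}) : R :=
  \big[Num.max/0]_(mo <- msupp f) `|f@_mo / (multinomX mo)%:R|.

(* evaluation of the homogenization of f with respect to Y only:
   bar f(x, y, z) = sum f_beta(x) y^beta z^(m - |beta|), m = deg_Y f *)
Definition homY_eval (f : {mpoly R[n + r]}) (x : 'I_n -> R) (y : 'I_r -> R) (z : R) : R :=
  \sum_(mo <- msupp f)
    f@_mo * (\prod_(i < n) x i ^+ mo (lshift r i))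
          * (\prod_(j < r) y j ^+ mo (rshift n j))
          * z ^+ (degY f - degYm mo).

End Defs.

Definition in_simplex (R : realType) (n : nat) (x : 'I_n -> R) : Prop :=
  (forall i, 0 <= x i) /\ \sum_(i < n) x i <= 1.

Definition in_sphere (R : realType) (r : nat) (y : 'I_r -> R) (z : R) : Prop :=
  \sum_(j < r) y j ^+ 2 + z ^+ 2 = 1.

Definition eucl_norm (R : realType) (n : nat) (x : 'I_n -> R) : R :=
  Num.sqrt (\sum_(i < n) x i ^+ 2).

(* Main.v *)
Require Import Defs.
From HB Require Import structures.
From mathcomp Require Import all_boot all_order all_algebra.
From mathcomp Require Import reals.
From mathcomp Require Import mpoly.
From mathcomp Require Import ring lra.
Import Order.TTheory GRing.Theory Num.Theory.
Local Open Scope ring_scope.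
Set Implicit Arguments. Unset Strict Implicit.

Section Gen.
Variable R : realType.

Lemma sum_sub_uniq (T : eqType) (s t : seq T) (g : T -> R) :
  uniq s -> {subset s <= t} -> (forall x, x \in t -> 0 <= g x) ->
  \sum_(x <- s) g x <= \sum_(x <- t) g x.
Proof.
elim: s t => [|a s IH] t /= us st g0.
  by rewrite big_nil big_seq; apply: sumr_ge0 => x; apply: g0.
case/andP: us => as' us.
have at': a \in t by apply: st; rewrite mem_head.
rewrite big_cons (perm_big _ (perm_to_rem at')) big_cons lerD2l.
apply: IH => //.
- move=> x xs; apply: rem_mem; last by apply: st; rewrite inE xs orbT.
  by apply/eqP => xa; move: as'; rewrite -xa xs.
- by move=> x /mem_rem; apply: g0.
Qed.

Lemma group_le (T K : eqType) (s : seq T) (L : seq K) (key : T -> K) (g : T -> R) :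
  (forall x, x \in s -> key x \in L) -> (forall x, x \in s -> 0 <= g x) ->
  \sum_(x <- s) g x <= \sum_(b <- L) \sum_(x <- s | key x == b) g x.
Proof.
move=> kL g0.
rewrite (exchange_big_dep xpredT) //=.
rewrite [leRHS]big_seq_cond [leLHS]big_seq_cond; apply: ler_sum => x /andP[xs _].
rewrite big_const_seq.
have: (0 < count (fun b => key x == b) L)%N.
  by rewrite -has_count; apply/hasP; exists (key x) => //; apply: kL.
case: (count _ L) => // c _ /=.
rewrite lerDl.
elim: c => [|c IHc] /=; first by [].
by rewrite addr_ge0 // g0.
Qed.

End Gen.
Section WSec.
Variables (R : realType) (n : nat).
Local Notation mon := {ffun 'I_n -> nat}.

Definition addE (a : mon) (i : 'I_n) : mon := [ffun j => (a j + (j == i))%N].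
Definition subE (a : mon) (i : 'I_n) : mon := [ffun j => (a j - (j == i))%N].
Definition mon0 : mon := [ffun => 0%N].
Definition degm (a : mon) : nat := (\sum_j a j)%N.
Definition Pw (v : 'I_n -> R) (a : mon) : R := \prod_j v j ^+ a j.

Fixpoint W (k : nat) (h : mon -> R) : R :=
  match k with 0 => h mon0 | k'.+1 => \sum_(i < n) W k' (fun a => h (addE a i)) end.

Lemma W_le k h g : (forall a, h a <= g a) -> W k h <= W k g.
Proof.
elim: k h g => [|k IH] h g hg /=; first exact: hg.
by apply: ler_sum => i _; apply: IH => a; apply: hg.
Qed.

Lemma W_ext k h g : (forall a, h a = g a) -> W k h = W k g.
Proof.
elim: k h g => [|k IH] h g hg /=; first exact: hg.
by apply: eq_bigr => i _; apply: IH => a; apply: hg.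
Qed.

Lemma W_add k h g : W k (fun a => h a + g a) = W k h + W k g.
Proof.
elim: k h g => [|k IH] h g //=.
by rewrite -big_split /=; apply: eq_bigr => i _; rewrite IH.
Qed.

Lemma W_scale k c h : W k (fun a => c * h a) = c * W k h.
Proof.
elim: k h => [|k IH] h //=.
by rewrite mulr_sumr; apply: eq_bigr => i _; rewrite IH.
Qed.

Lemma sum_eqi (i : 'I_n) : (\sum_(j < n) (j == i))%N = 1%N.
Proof.
by rewrite (bigD1 i) //= eqxx big1 // => j /negbTE ->.
Qed.

Lemma Pw_addE v a i : Pw v (addE a i) = v i * Pw v a.
Proof.
rewrite /Pw.
under eq_bigr => j _ do rewrite ffunE exprD.
rewrite big_split /= mulrC; congr (_ * _).
by rewrite (bigD1 i) //= eqxx expr1 big1 ?mulr1 // => j /negbTE ->.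
Qed.

Lemma Pw0 v : Pw v mon0 = 1.
Proof. by rewrite /Pw big1 // => j _; rewrite ffunE expr0. Qed.

Lemma Pw_ge0 v a : (forall i, 0 <= v i) -> 0 <= Pw v a.
Proof. by move=> v0; apply: prodr_ge0 => i _; apply: exprn_ge0. Qed.

Lemma W_Pw k v : W k (Pw v) = (\sum_i v i) ^+ k.
Proof.
elim: k => [|k IH] /=; first by rewrite Pw0 expr0.
rewrite exprS mulr_suml; apply: eq_bigr => i _.
by rewrite (W_ext _ (g := fun a => v i * Pw v a)) ?W_scale ?IH // => a; rewrite Pw_addE.
Qed.

Lemma W_D k (u v : 'I_n -> R) :
  (forall i, 0 <= u i) -> (forall i, 0 <= v i) ->
  \sum_i u i <= 1 -> \sum_i v i <= 1 ->
  W k (fun a => `|Pw u a - Pw v a|) <= k%:R * \sum_i `|u i - v i|.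
Proof.
move=> u0 v0 u1 v1.
set S := \sum_i `|u i - v i|.
have S0 : 0 <= S by apply: sumr_ge0 => i _.
elim: k => [|k IH] /=; first by rewrite !Pw0 subrr normr0 mul0r.
apply: (@le_trans _ _ (\sum_i (u i * (k%:R * S) + `|u i - v i|))).
  apply: ler_sum => i _.
  apply: (@le_trans _ _ (W k (fun a => u i * `|Pw u a - Pw v a| + `|u i - v i| * Pw v a))).
    apply: W_le => a; rewrite !Pw_addE.
    have -> : u i * Pw u a - v i * Pw v a = u i * (Pw u a - Pw v a) + (u i - v i) * Pw v a.
      by rewrite mulrBr mulrBl addrA subrK.
    apply: (le_trans (ler_normD _ _)).
    by rewrite !normrM (ger0_norm (u0 i)) (ger0_norm (Pw_ge0 _ v0)).
  rewrite W_add !W_scale W_Pw lerD //.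
    by rewrite ler_wpM2l.
  rewrite ler_piMr // exprn_ile1 //; by apply: sumr_ge0 => j _.
rewrite big_split /= -mulr_suml -/S.
rewrite -[k.+1]addn1 natrD mulrDl mul1r lerD2r.
by rewrite ler_piMl // mulr_ge0.
Qed.


Definition Pf (a : mon) : nat := (\prod_j (a j)`!)%N.
Definition Mq (a : mon) : R := ((degm a)`!)%:R / (Pf a)%:R.

Lemma Pf_gt0 a : (0 < Pf a)%N.
Proof. by apply: prodn_gt0 => j; apply: fact_gt0. Qed.

Lemma Pf_le a : (Pf a <= (degm a)`!)%N.
Proof.
rewrite /Pf /degm.
apply: (big_ind2 (fun p s => p <= s`!)%N) => //.
move=> x1 x2 y1 y2 h1 h2.
apply: (leq_trans (leq_mul h1 h2)).
have e := bin_fact (leq_addr y2 x2); rewrite [(x2 + y2 - x2)%N]addKn in e.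
rewrite -e leq_pmull // bin_gt0; exact: leq_addr.
Qed.

Lemma addE_subE (a : mon) (i : 'I_n) : (0 < a i)%N -> addE (subE a i) i = a.
Proof.
move=> ai; apply/ffunP => j; rewrite !ffunE.
by case: eqP => [->|_]; rewrite ?subn0 ?addn0 // subnK.
Qed.

Lemma degm_addE a i : degm (addE a i) = (degm a).+1.
Proof.
rewrite /degm; under eq_bigr => j _ do rewrite ffunE.
by rewrite big_split /= sum_eqi addn1.
Qed.

Lemma degm_subE (a : mon) (i : 'I_n) : (0 < a i)%N -> (degm (subE a i)).+1 = degm a.
Proof. by move=> ai; rewrite -(degm_addE _ i) addE_subE. Qed.

Lemma Pf_subE (a : mon) (i : 'I_n) : (0 < a i)%N -> (Pf a = a i * Pf (subE a i))%N.
Proof.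
move=> ai; rewrite /Pf (bigD1 i) //= [X in _ = (_ * X)%N](bigD1 i) //= ffunE eqxx.
rewrite mulnA; congr (_ * _)%N; first by case: (a i) ai => // k _; rewrite /= subn1 factS.
by apply: eq_bigr => j /negbTE ji; rewrite ffunE ji subn0.
Qed.

Lemma Mq_rec (a : mon) : (0 < degm a)%N ->
  Mq a = \sum_(i | (0 < a i)%N) Mq (subE a i).
Proof.
move=> da.
have PfR : (Pf a)%:R != 0 :> R by rewrite pnatr_eq0 -lt0n Pf_gt0.
have -> : \sum_(i | (0 < a i)%N) Mq (subE a i) =
          \sum_(i | (0 < a i)%N) ((degm a).-1`!)%:R * (a i)%:R / (Pf a)%:R.
  apply: eq_bigr => i ai; rewrite /Mq -(degm_subE ai) /= (Pf_subE ai) natrM.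
  have ai0 : (a i)%:R != 0 :> R by rewrite pnatr_eq0 -lt0n.
  have pf0 : (Pf (subE a i))%:R != 0 :> R by rewrite pnatr_eq0 -lt0n Pf_gt0.
  by field; rewrite ai0 pf0.
rewrite -mulr_suml -mulr_sumr.
have -> : \sum_(i | (0 < a i)%N) (a i)%:R = (degm a)%:R :> R.
  symmetry; rewrite /degm natr_sum (bigID (fun i => (0 < a i)%N)) /= [X in _ + X]big1 ?addr0 //.
  by move=> i; rewrite -leqNgt leqn0 => /eqP ->.
move: da; rewrite /Mq; case: (degm a) => // k _ /=; rewrite factS natrM; ring.
Qed.

Lemma Mq0 : Mq mon0 = 1.
Proof.
rewrite /Mq /Pf /degm big1 ?big1 //= ?divr1 // => j _; rewrite ffunE //.
Qed.

Lemma W_lower k h (A : seq mon) :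
  (forall a, 0 <= h a) -> uniq A -> (forall a, a \in A -> degm a = k) ->
  \sum_(a <- A) Mq a * h a <= W k h.
Proof.
elim: k h A => [|k IH] h A h0 uA dA /=.
  apply: (le_trans (sum_sub_uniq (t := [:: mon0]) uA _ _)).
  - move=> a aA; rewrite inE; apply/eqP/ffunP => j; rewrite ffunE.
    have := dA a aA; rewrite /degm => /eqP; rewrite sum_nat_eq0 => /forallP /(_ j) /eqP //.
  - by move=> a _; rewrite mulr_ge0 // /Mq divr_ge0.
  by rewrite big_seq1 Mq0 mul1r.
rewrite big_seq.
under eq_bigr => a aA do rewrite (Mq_rec (a := a)) ?(dA a aA) // mulr_suml.
rewrite -big_seq (exchange_big_dep xpredT) //=.
apply: ler_sum => i _.
rewrite -big_filter.
rewrite (@eq_big_seq _ _ _ _ _ _ (fun a => Mq (subE a i) * h (addE (subE a i) i))); last first.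
  by move=> a; rewrite mem_filter => /andP[ai _]; rewrite addE_subE.
rewrite -(big_map (fun a => subE a i) xpredT (fun c => Mq c * h (addE c i))).
apply: IH => //.
- rewrite map_inj_in_uniq ?filter_uniq //.
  move=> a b; rewrite !mem_filter => /andP[ai _] /andP[bi _] e.
  by rewrite -(addE_subE ai) -(addE_subE bi) e.
- move=> c /mapP[a]; rewrite mem_filter => /andP[ai aA] ->.
  by apply: succn_inj; rewrite degm_subE // dA.
Qed.

End WSec.

Fixpoint Bl (r m : nat) : seq (seq nat) :=
  match r with
  | 0 => [:: [::]]
  | r'.+1 => flatten [seq [seq b :: t | t <- Bl r' (m - b)] | b <- iota 0 m.+1]
  end.

Lemma Bl_mem r m s : size s = r -> (sumn s <= m)%N -> s \in Bl r m.
Proof.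
elim: r m s => [|r IH] m [|b t] // [st] hs.
change (b :: t \in flatten [seq [seq b0 :: t0 | t0 <- Bl r (m - b0)] | b0 <- iota 0 m.+1]).
apply/flatten_mapP; exists b.
  by rewrite mem_iota /= add0n ltnS (leq_trans (leq_addr _ _) hs).
apply: map_f; apply: IH => //; by rewrite leq_subRL // (leq_trans (leq_addr _ _) hs).
Qed.

Lemma hockey r m : (\sum_(0 <= b < m.+1) 'C(m - b + r, r))%N = 'C(m + r.+1, r.+1).
Proof.
elim: m => [|m IH]; first by rewrite big_nat1 subn0 add0n binn add0n binn.
rewrite big_nat_recl //= subn0.
under eq_bigr => b _ do rewrite subSS.
by rewrite IH [in RHS]addSn binS addSn -addnS addnC.
Qed.

Lemma size_Bl r m : size (Bl r m) = 'C(m + r, r).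
Proof.
elim: r m => [|r IH] m; first by rewrite addn0 bin0.
change (size (flatten [seq [seq b :: t | t <- Bl r (m - b)] | b <- iota 0 m.+1]) = 'C(m + r.+1, r.+1)).
rewrite size_flatten /shape -map_comp sumnE big_map.
under eq_bigr => b _ do rewrite /= size_map IH.
by rewrite -hockey.
Qed.

Section Fin.
Variable R : realType.

Lemma sum_iota_R d : \sum_(k <- iota 0 d.+1) (k%:R : R) = (d * d.+1)%:R / 2.
Proof.
elim: d => [|d IH]; first by rewrite big_seq1 mul0n mul0r.
rewrite -[iota 0 d.+2]/(index_iota 0 d.+2) big_nat_recr //= -[index_iota 0 d.+1]/(iota 0 d.+1) IH.
by rewrite !natrM -!natr1; field.
Qed.

Lemma cs (n : nat) (e : 'I_n -> R) :
  \sum_i `|e i| <= Num.sqrt n%:R * Num.sqrt (\sum_i e i ^+ 2).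
Proof.
have S0 : 0 <= \sum_i `|e i| by apply: sumr_ge0.
have Q0 : 0 <= \sum_i e i ^+ 2 by apply: sumr_ge0 => i _; apply: sqr_ge0.
rewrite -sqrtrM // -(ger0_norm S0) -sqrtr_sqr ler_sqrt; last by rewrite mulr_ge0.
have H : 0 <= \sum_(i < n) \sum_(j < n) (`|e i| - `|e j|) ^+ 2.
  by apply: sumr_ge0 => i _; apply: sumr_ge0 => j _; apply: sqr_ge0.
have E : \sum_(i < n) \sum_(j < n) (`|e i| - `|e j|) ^+ 2 =
    \sum_(i < n) \sum_(j < n) (e i ^+ 2 + e j ^+ 2 - 2 * (`|e i| * `|e j|)).
  apply: eq_bigr => i _; apply: eq_bigr => j _.
  by rewrite -(real_normK (num_real (e i))) -(real_normK (num_real (e j))); ring.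
rewrite E in H; clear E.
have E2 : \sum_(i < n) \sum_(j < n) (e i ^+ 2 + e j ^+ 2 - 2 * (`|e i| * `|e j|)) =
   n%:R * (\sum_i e i ^+ 2) + n%:R * (\sum_i e i ^+ 2) - 2 * ((\sum_i `|e i|) * (\sum_i `|e i|)).
  under eq_bigr => i _ do rewrite sumrB big_split /= sumr_const card_ord -!mulr_sumr.
  rewrite sumrB big_split /= sumr_const card_ord -!mulr_sumr.
  by rewrite sumrMnl -mulr_suml !mulr_natl.
rewrite E2 in H; clear E2.
rewrite expr2.
move: H S0 Q0.
move: (\sum_i e i ^+ 2) (\sum_i `|e i|) => Q S H _ _.
lra.
Qed.

End Fin.

Section Main.
Variables (R : realType) (n r : nat).

Definition aof (mo : 'X_{1..n + r}) : {ffun 'I_n -> nat} := [ffun i => mo (lshift r i)].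
Definition key (mo : 'X_{1..n + r}) : seq nat := [seq mo (rshift n j) | j <- enum 'I_r].

Lemma mo_eq (mo1 mo2 : 'X_{1..n + r}) : key mo1 = key mo2 -> aof mo1 = aof mo2 -> mo1 = mo2.
Proof.
move=> hk ha; apply/mnmP => i; rewrite -(splitK i); case: (split i) => [j|j] /=.
  by have := congr1 (fun a : {ffun 'I_n -> nat} => a j) ha; rewrite !ffunE.
have := congr1 (fun s => nth 0%N s j) hk.
by rewrite !(nth_map j) -?enumT ?size_enum_ord // nth_ord_enum.
Qed.

Lemma degm_aof mo : degm (aof mo) = degXm mo.
Proof. by rewrite /degm /degXm; apply: eq_bigr => i _; rewrite ffunE. Qed.

Lemma Pf_aof mo : Pf (aof mo) = (\prod_(i < n) (mo (lshift r i))`!)%N.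
Proof. by rewrite /Pf; apply: eq_bigr => i _; rewrite ffunE. Qed.

Lemma Pw_aof (x : 'I_n -> R) mo : Pw x (aof mo) = \prod_(i < n) x i ^+ mo (lshift r i).
Proof. by rewrite /Pw; apply: eq_bigr => i _; rewrite ffunE. Qed.

Lemma sumn_key mo : sumn (key mo) = degYm mo.
Proof. by rewrite /key sumnE big_map big_enum. Qed.

Lemma size_key mo : size (key mo) = r.
Proof. by rewrite size_map size_enum_ord. Qed.

Lemma multinom_le mo : ((@multinomX n r mo)%:R : R) <= Mq R (aof mo).
Proof.
rewrite /multinomX /Mq degm_aof -Pf_aof.
rewrite ler_pdivlMr ?ltr0n ?Pf_gt0 // -natrM ler_nat.
exact: leq_divM.
Qed.

Lemma multinom_gt0 mo : (0 < @multinomX n r mo)%N.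
Proof.
rewrite /multinomX -Pf_aof -degm_aof divn_gt0 ?Pf_gt0 //; exact: Pf_le.
Qed.

End Main.

Lemma bigmax_ge0 (R : realType) (T : Type) (s : seq T) (F : T -> R) :
  0 <= \big[Num.max/0]_(x <- s) F x.
Proof. by elim: s => [|a s IH]; rewrite ?big_nil // big_cons le_max IH orbT. Qed.

Lemma bigmax_ge (R : realType) (T : eqType) (s : seq T) (F : T -> R) x :
  x \in s -> F x <= \big[Num.max/0]_(y <- s) F y.
Proof.
elim: s => [|a s IH] //; rewrite inE big_cons le_max => /orP[/eqP ->|xs].
  by rewrite lexx.
by rewrite IH ?orbT.
Qed.

Lemma tb (R : realType) (c P1 P2 Y Z K : R) : `|c| <= K -> `|Y * Z| <= 1 ->
  `|c * P1 * Y * Z - c * P2 * Y * Z| <= K * `|P1 - P2|.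
Proof.
move=> hc hYZ.
have -> : c * P1 * Y * Z - c * P2 * Y * Z = (c * (P1 - P2)) * (Y * Z) by ring.
rewrite normrM normrM.
apply: (le_trans (ler_wpM2l _ hYZ)); first by rewrite mulr_ge0.
by rewrite mulr1 ler_wpM2r.
Qed.

Lemma sq_le1 (R : realType) (a : R) : a ^+ 2 <= 1 -> `|a| <= 1.
Proof. by rewrite -real_normK ?num_real // expr_le1. Qed.

Unset Implicit Arguments.

Theorem lemma7 (R : realType) (n r d m : nat) (f : {mpoly R[n + r]})
  (hd : degX f = d) (hm : degY f = m)
  (x1 x2 : 'I_n -> R) (y : 'I_r -> R) (z : R)
  (hx1 : in_simplex x1) (hx2 : in_simplex x2) (hyz : in_sphere y z) :
  `|homY_eval f x1 y z - homY_eval f x2 y z|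
    <= 2^-1 * Num.sqrt (n%:R) * bnorm f * ('C(m + r, r))%:R * (d * d.+1)%:R
       * eucl_norm (fun i => x1 i - x2 i).
Proof.
case: hx1 => u0 u1; case: hx2 => v0 v1.
have Bge0 : 0 <= bnorm f by apply: bigmax_ge0.
have yb : forall j, `|y j| <= 1.
  move=> j; apply: sq_le1; rewrite -hyz (bigD1 j) //= -addrA lerDl.
  by rewrite addr_ge0 ?sqr_ge0 // sumr_ge0 // => i _; apply: sqr_ge0.
have zb : `|z| <= 1.
  apply: sq_le1; rewrite -hyz lerDr.
  by rewrite sumr_ge0 // => i _; apply: sqr_ge0.
have Yb : forall mo : 'X_{1..n + r},
    `|(\prod_(j < r) y j ^+ mo (rshift n j)) * z ^+ (degY f - degYm mo)| <= 1.
  move=> mo; rewrite normrM normr_prod normrX.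
  apply: mulr_ile1; rewrite ?exprn_ge0 ?exprn_ile1 //.
    by apply: prodr_ge0 => j _; rewrite normrX exprn_ge0.
  by apply: prodr_ile1 => j _; rewrite normrX exprn_ge0 //= exprn_ile1.
have cb : forall mo, mo \in msupp f -> `|f@_mo| <= bnorm f * Mq R (aof mo).
  move=> mo hmo.
  have M0 : ((@multinomX n r mo)%:R : R) != 0 by rewrite pnatr_eq0 -lt0n multinom_gt0.
  have -> : f@_mo = f@_mo / (@multinomX n r mo)%:R * (@multinomX n r mo)%:R by rewrite divfK.
  rewrite normrM (ger0_norm (ler0n _ _)).
  have hb : `|f@_mo / (@multinomX n r mo)%:R| <= bnorm f.
    exact: (bigmax_ge (fun mo => `|f@_mo / (@multinomX n r mo)%:R|) hmo).
  apply: le_trans (ler_wpM2r (ler0n _ _) hb) _.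
  by apply: ler_wpM2l => //; apply: multinom_le.
have A : `|homY_eval f x1 y z - homY_eval f x2 y z| <=
    bnorm f * \sum_(mo <- msupp f) (Mq R (aof mo) * `|Pw x1 (aof mo) - Pw x2 (aof mo)|).
  rewrite /homY_eval -sumrB mulr_sumr.
  apply: (le_trans (ler_norm_sum _ _ _)).
  rewrite big_seq [leRHS]big_seq; apply: ler_sum => mo hmo.
  rewrite !Pw_aof mulrA; apply: tb; [exact: cb | exact: Yb].
have C : forall b, \sum_(mo <- msupp f | key mo == b)
      (Mq R (aof mo) * `|Pw x1 (aof mo) - Pw x2 (aof mo)|)
    <= (d * d.+1)%:R / 2 * \sum_i `|x1 i - x2 i|.
  move=> b; rewrite -big_filter.
  apply: le_trans (group_le (L := iota 0 d.+1) (key := fun mo => @degXm n r mo) _ _) _.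
  - move=> mo; rewrite mem_filter => /andP[_ hmo]; rewrite mem_iota add0n ltnS -hd.
    exact: (leq_bigmax_seq _ hmo).
  - by move=> mo _; rewrite mulr_ge0 // /Mq divr_ge0.
  rewrite -sum_iota_R mulr_suml; apply: ler_sum => k _.
  rewrite -big_filter.
  rewrite -(big_map (@aof n r) xpredT (fun a => Mq R a * `|Pw x1 a - Pw x2 a|)).
  apply: le_trans (@W_lower R n k (fun a => `|Pw x1 a - Pw x2 a|) _ _ _ _) (@W_D R n k x1 x2 u0 v0 u1 v1) => //.
  - rewrite map_inj_in_uniq ?filter_uniq ?msupp_uniq //.
    move=> mo1 mo2; rewrite !mem_filter => /andP[_ /andP[/eqP h1 _]] /andP[_ /andP[/eqP h2 _]] ha.
    by apply: mo_eq => //; rewrite h1 h2.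
  - move=> a /mapP[mo]; rewrite !mem_filter => /andP[/eqP hk _] ->.
    by rewrite degm_aof.
have Bsum : \sum_(mo <- msupp f) (Mq R (aof mo) * `|Pw x1 (aof mo) - Pw x2 (aof mo)|)
    <= ('C(m + r, r))%:R * ((d * d.+1)%:R / 2 * \sum_i `|x1 i - x2 i|).
  apply: le_trans (group_le (L := Bl r m) (key := @key n r) _ _) _.
  - move=> mo hmo; apply: Bl_mem; first exact: size_key.
    by rewrite sumn_key -hm; exact: (leq_bigmax_seq _ hmo).
  - by move=> mo _; rewrite mulr_ge0 // /Mq divr_ge0.
  apply: le_trans (ler_sum _ (fun b _ => C b)) _.
  by rewrite big_const_seq count_predT size_Bl iter_addr_0 [X in _ <= X]mulr_natl.
have Scs : \sum_i `|x1 i - x2 i| <= Num.sqrt n%:R * eucl_norm (fun i => x1 i - x2 i).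
  exact: cs.
apply: le_trans A _.
apply: le_trans (ler_wpM2l Bge0 Bsum) _.
have -> : 2^-1 * Num.sqrt (n%:R) * bnorm f * ('C(m + r, r))%:R * (d * d.+1)%:R
       * eucl_norm (fun i => x1 i - x2 i) =
   bnorm f * (('C(m + r, r))%:R * ((d * d.+1)%:R / 2 * (Num.sqrt n%:R * eucl_norm (fun i => x1 i - x2 i)))).
  by ring.
apply: ler_wpM2l => //; apply: ler_wpM2l => //.
by apply: ler_wpM2l => //; rewrite divr_ge0.
Qed.
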